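(* A sequence of positive integers $(k_n,\ldots,k_1)$ is the restricted sequence of some non-crossing $n$-chord diagram if and only if $k_1=1$ and $k_{i+1}\le k_i+1$ for $1\le i\le n-1$.
   Context: A non-crossing $n$-chord diagram is a non-crossing perfect matching of $\{1,\ldots,2n\}$ (arcs in the upper half-plane with endpoints $1,\ldots,2n$); $D_n$ is the set of these, $D_0=\{\phi\}$. For $1\le k\le 2n+1$, $l_k:D_n\to D_{n+1}$: $l_k(\alpha)$ matches $k$ with $k+1$, and each old point $i$ becomes $i$ if $i<k$ and $i+2$ if $i\ge k$, old pairs kept. For $\alpha\in D_n$ ($n\ge1$) let $k_n$ be the smallest $k$ such that $k$ is matched with $k+1$, and $\alpha'\in D_{n-1}$ be $\alpha$ with that arc removed and points renumbered order-preservingly, so $\alpha=l_{k_n}(\alpha')$. The restricted sequence of $\alpha$ is $(k_n,k_{n-1},\ldots,k_1)$, where $(k_{n-1},\ldots,k_1)$ is the restricted sequence of $\alpha'$ (empty for $\phi$). *)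

(* Defs.v *)
From mathcomp Require Import all_boot.
Set Implicit Arguments. Unset Strict Implicit. Unset Printing Implicit Defensive.

(* A chord diagram on the points 1..2n is represented by its partner
   function alpha : nat -> nat (alpha i = the point matched with i).
   Values outside 1..2n are irrelevant. *)

Definition in_pts (n i : nat) : bool := (1 <= i) && (i <= n.*2).

Definition perfect_matching (n : nat) (alpha : nat -> nat) : Prop :=
  forall i, in_pts n i ->
    [/\ in_pts n (alpha i), alpha i != i & alpha (alpha i) = i].

Definition non_crossing (n : nat) (alpha : nat -> nat) : Prop :=
  forall a b, in_pts n a -> in_pts n b ->
    ~ [/\ a < b, b < alpha a & alpha a < alpha b].

Definition D (n : nat) (alpha : nat -> nat) : Prop :=
  perfect_matching n alpha /\ non_crossing n alpha.

Definition lk (k : nat) (alpha : nat -> nat) : nat -> nat :=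
  fun i => if i == k then k.+1 else if i == k.+1 then k
           else let j := if i < k then i else i - 2 in
                let m := alpha j in if m < k then m else m + 2.

Definition kmin (n : nat) (alpha : nat -> nat) : nat :=
  nth 0 (iota 1 (n.*2)) (find (fun k => alpha k == k.+1) (iota 1 (n.*2))).

Definition remove_arc (k : nat) (alpha : nat -> nat) : nat -> nat :=
  fun i => let j := if i < k then i else i + 2 in
           let m := alpha j in if m < k then m else m - 2.

(* restricted sequence (k_n, k_{n-1}, ..., k_1) of alpha in D_n *)
Fixpoint restricted_seq (n : nat) (alpha : nat -> nat) : seq nat :=
  match n with
  | 0 => [::]
  | n'.+1 => let k := kmin n alpha in
             k :: restricted_seq n' (remove_arc k alpha)
  end.

(* Main.v *)
Require Import Defs.
From mathcomp Require Import all_boot.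
From mathcomp Require Import zify.

Definition up (k i : nat) := if i < k then i else i + 2.
Definition dn (k m : nat) := if m < k then m else m - 2.

Ltac ifs := repeat (match goal with |- context [if ?b then _ else _] =>
  lazymatch b with context [if _ then _ else _] => fail | _ => case: (boolP b) => ? end end; rewrite /=).

Lemma dn_up k i : dn k (up k i) = i.
Proof. rewrite /dn /up; ifs; lia. Qed.

Lemma up_dn k m : m != k -> m != k.+1 -> up k (dn k m) = m.
Proof. move=> h1 h2; rewrite /dn /up; ifs; lia. Qed.

Lemma up_neq k i : (up k i != k) && (up k i != k.+1).
Proof. rewrite /up; ifs; lia. Qed.

Lemma up_mono k i j : i < j -> up k i < up k j.
Proof. move=> h; rewrite /up; ifs; lia. Qed.

Lemma dn_mono k m m' : m < m' -> m != k -> m != k.+1 -> m' != k -> m' != k.+1 ->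
  dn k m < dn k m'.
Proof. move=> h h1 h2 h3 h4; rewrite /dn; ifs; lia. Qed.

Lemma up_rng n k i : in_pts n i -> in_pts n.+1 (up k i).
Proof. rewrite /in_pts /up => h; ifs; lia. Qed.

Lemma dn_rng n k m : 1 <= k <= n.*2.+1 -> in_pts n.+1 m -> m != k -> m != k.+1 ->
  in_pts n (dn k m).
Proof. rewrite /in_pts /dn => h1 h2 h3 h4; ifs; lia. Qed.

Lemma remove_arcE k f i : remove_arc k f i = dn k (f (up k i)).
Proof. by []. Qed.

Lemma lkE k f i : i != k -> i != k.+1 -> lk k f i = up k (f (dn k i)).
Proof. by move=> h1 h2; rewrite /lk (negbTE h1) (negbTE h2). Qed.

Lemma fk1 n f k : perfect_matching n f -> f k = k.+1 -> in_pts n k -> f k.+1 = k.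
Proof. move=> pm fk hk; case: (pm k hk) => _ _; by rewrite fk. Qed.

Lemma avoid n f k x : perfect_matching n f -> f k = k.+1 -> in_pts n k -> in_pts n x ->
  x != k -> x != k.+1 -> (f x != k) && (f x != k.+1).
Proof.
move=> pm fk hk hx h1 h2.
have e1 := fk1 _ _ _ pm fk hk.
case: (pm x hx) => _ _ ffx.
apply/andP; split; apply/eqP=> e; move: ffx; rewrite e ?fk ?e1 => ffx; lia.
Qed.

Lemma remove_D n f k : D n.+1 f -> in_pts n.+1 k -> f k = k.+1 -> D n (remove_arc k f).
Proof.
move=> [pm nc] hk fk.
have hk2 : k <= n.*2.+1.
  case: (pm k hk); rewrite fk /in_pts => ? _ _; lia.
have hk' : 1 <= k <= n.*2.+1 by move: hk; rewrite /in_pts; lia.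
split.
- move=> i hi.
  have hx := up_rng _ k _ hi.
  have /andP[x1 x2] := up_neq k i.
  case: (pm _ hx) => hy yx fy.
  have /andP[y1 y2] := avoid _ _ _ _ pm fk hk hx x1 x2.
  rewrite !remove_arcE; split.
  + exact: dn_rng.
  + apply/eqP=> e. have := up_dn _ _ y1 y2. rewrite e => e2. by rewrite -e2 eqxx in yx.
  + by rewrite up_dn // fy dn_up.
- move=> a b ha hb [h1 h2 h3].
  have hA := up_rng _ k _ ha. have hB := up_rng _ k _ hb.
  have /andP[a1 a2] := up_neq k a. have /andP[b1 b2] := up_neq k b.
  have /andP[y1 y2] := avoid _ _ _ _ pm fk hk hA a1 a2.
  have /andP[z1 z2] := avoid _ _ _ _ pm fk hk hB b1 b2.
  apply: (nc _ _ hA hB); split.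
  + exact: up_mono.
  + have := up_mono k _ _ h2. by rewrite remove_arcE up_dn.
  + have := up_mono k _ _ h3. by rewrite !remove_arcE !up_dn.
Qed.

Lemma lk_D n f k : D n f -> 1 <= k <= n.*2.+1 -> D n.+1 (lk k f).
Proof.
move=> [pm nc] hk.
have lkk : lk k f k = k.+1 by rewrite /lk eqxx.
have lkk1 : lk k f k.+1 = k by rewrite /lk eqxx; case: eqP => //; lia.
split.
- move=> i hi.
  case: (eqVneq i k) => [->|ik]; first by rewrite lkk lkk1; split=> //; rewrite /in_pts; lia.
  case: (eqVneq i k.+1) => [->|ik1]; first by rewrite lkk1 lkk; split=> //; rewrite /in_pts; lia.
  have hd := dn_rng _ _ _ hk hi ik ik1.
  case: (pm _ hd) => hy yx fy.
  have /andP[u1 u2] := up_neq k (f (dn k i)).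
  rewrite !lkE //; split.
  + exact: up_rng.
  + apply/eqP=> e. have := dn_up k (f (dn k i)). rewrite e => e2. by rewrite -e2 eqxx in yx.
  + by rewrite dn_up fy up_dn.
- move=> a b ha hb [h1 h2 h3].
  case: (eqVneq a k) => [ak|ak]; first by move: h2 h3; rewrite ak lkk; lia.
  case: (eqVneq a k.+1) => [ak'|ak1]; first by move: h2 h3; rewrite ak' lkk1; lia.
  case: (eqVneq b k) => [bk|bk]; first by move: h2 h3; rewrite bk lkk; lia.
  case: (eqVneq b k.+1) => [bk'|bk1]; first by move: h2 h3; rewrite bk' lkk1; lia.
  have hA := dn_rng _ _ _ hk ha ak ak1. have hB := dn_rng _ _ _ hk hb bk bk1.
  have /andP[u1 u2] := up_neq k (f (dn k a)).
  have /andP[v1 v2] := up_neq k (f (dn k b)).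
  apply: (nc _ _ hA hB); split.
  + exact: dn_mono.
  + have := dn_mono k _ _ h2 bk bk1. by rewrite lkE // dn_up; apply.
  + have := dn_mono k _ _ h3. by rewrite !lkE // !dn_up; apply.
Qed.

Lemma remove_lk k f : remove_arc k (lk k f) =1 f.
Proof.
move=> i; have /andP[u1 u2] := up_neq k i.
by rewrite remove_arcE lkE // !dn_up.
Qed.

Lemma adj_exists n f : D n f -> 0 < n -> exists j, in_pts n j /\ f j = j.+1.
Proof.
move=> [pm nc] n0.
suff H : forall d a, in_pts n a -> a < f a -> f a - a <= d ->
    exists j, in_pts n j /\ f j = j.+1.
  have h1 : in_pts n 1 by rewrite /in_pts; lia.
  case: (pm 1 h1) => hf f1 _.
  apply: (H (f 1) 1 h1); move: hf f1; rewrite /in_pts; lia.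
elim=> [|d IH] a ha hlt hd; first lia.
case: (eqVneq (f a) a.+1) => [e|ne]; first by exists a.
case: (pm _ ha) => hfa _ ffa.
have hb : in_pts n a.+1 by move: ha hfa; rewrite /in_pts; lia.
case: (pm _ hb) => hc cb fc.
have h1 : ~ (f a.+1 < a).
  move=> cl; apply: (nc _ _ hc ha); rewrite fc; split; lia.
have h2 : ~ (f a < f a.+1).
  move=> cg; apply: (nc _ _ ha hb); split; lia.
have h3 : f a.+1 != a by apply/eqP=> e; move: fc; rewrite e; lia.
have h4 : f a.+1 != f a by apply/eqP=> e; move: fc; rewrite e ffa; lia.
apply: (IH a.+1 hb); lia.
Qed.

Lemma kmin_spec n f : D n f -> 0 < n ->
  [/\ 1 <= kmin n f, kmin n f < n.*2, f (kmin n f) = (kmin n f).+1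
    & forall j, 1 <= j < kmin n f -> f j != j.+1].
Proof.
move=> hD n0; have [j [hj fj]] := adj_exists _ _ hD n0.
have hh : has (fun k => f k == k.+1) (iota 1 n.*2).
  apply/hasP; exists j; [rewrite mem_iota; move: hj; rewrite /in_pts; lia | exact/eqP].
have hlt : find (fun k => f k == k.+1) (iota 1 n.*2) < n.*2.
  by rewrite -[X in _ < X](size_iota 1) -has_find.
have e : kmin n f = 1 + find (fun k => f k == k.+1) (iota 1 n.*2).
  by rewrite /kmin nth_iota.
have fk : f (kmin n f) = (kmin n f).+1 by apply/eqP; exact: (nth_find 0 hh).
have hr : in_pts n (kmin n f) by rewrite /in_pts; lia.
case: hD => pm _; case: (pm _ hr); rewrite fk /in_pts => hr2 _ _.
split=> //; try lia.
move=> i hi.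
have hi2 : i.-1 < find (fun k => f k == k.+1) (iota 1 n.*2) by lia.
have := before_find 0 hi2; rewrite nth_iota; last lia.
have -> : 1 + i.-1 = i by lia.
by move=> ->.
Qed.

Lemma kmin_eq n f k : f k = k.+1 -> 1 <= k <= n.*2 ->
  (forall j, 1 <= j < k -> f j != j.+1) -> kmin n f = k.
Proof.
move=> fk hk H.
have hh : has (fun k => f k == k.+1) (iota 1 n.*2).
  apply/hasP; exists k; [rewrite mem_iota; lia | exact/eqP].
have hlt : find (fun k => f k == k.+1) (iota 1 n.*2) < n.*2.
  by rewrite -[X in _ < X](size_iota 1) -has_find.
have e : kmin n f = 1 + find (fun k => f k == k.+1) (iota 1 n.*2).
  by rewrite /kmin nth_iota.
have fk' : f (kmin n f) = (kmin n f).+1 by apply/eqP; exact: (nth_find 0 hh).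
rewrite e in fk' *.
case: (ltngtP (1 + find (fun k => f k == k.+1) (iota 1 n.*2)) k) => h //.
- suff : f (1 + find (fun k => f k == k.+1) (iota 1 n.*2)) != 
         (1 + find (fun k => f k == k.+1) (iota 1 n.*2)).+1 by rewrite fk' eqxx.
  apply: H; lia.
- have hi2 : k.-1 < find (fun k => f k == k.+1) (iota 1 n.*2) by lia.
  have := before_find 0 hi2; rewrite nth_iota; last lia.
  have -> : 1 + k.-1 = k by lia.
  by rewrite fk eqxx.
Qed.

Lemma rs_ext n f g : f =1 g -> restricted_seq n f = restricted_seq n g.
Proof.
elim: n f g => [//|n IH] f g fg /=.
have e : kmin n.+1 f = kmin n.+1 g.
  rewrite /kmin (@eq_find _ _ (fun k => g k == k.+1)) // => x; by rewrite fg.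
rewrite e; congr (_ :: _); apply: IH => i; by rewrite /remove_arc fg.
Qed.

Fixpoint goodb (s : seq nat) : bool :=
  match s with
  | [::] => true
  | [:: k] => k == 1
  | k :: ((k' :: _) as t) => (k <= k'.+1) && goodb t
  end.

Lemma goodb_cons2 k k' r : goodb (k :: k' :: r) = (k <= k'.+1) && goodb (k' :: r).
Proof. by []. Qed.

Lemma rs_S n f : restricted_seq n.+1 f =
  kmin n.+1 f :: restricted_seq n (remove_arc (kmin n.+1 f) f).
Proof. by []. Qed.

Lemma good_nth s : goodb s <->
  ((0 < size s -> nth 0 s (size s - 1) = 1) /\
   (forall i, 1 <= i <= size s - 1 ->
      nth 0 s (size s - i.+1) <= (nth 0 s (size s - i)).+1)).
Proof.
elim: s => [|k t IH].
  split=> // _; split=> // i; lia.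
case: t IH => [|k' t] IH.
  rewrite /=; split.
    move/eqP=> ->; split=> // i; lia.
  by case=> h _; apply/eqP; apply: h.
rewrite goodb_cons2.
have E1 : size [:: k, k' & t] = (size t).+2 by [].
have E2 : size (k' :: t) = (size t).+1 by [].
rewrite E1; rewrite E2 in IH.
rewrite (_ : (size t).+2 - 1 = (size t).+1); last lia.
split.
- move=> /andP[hk /IH [h1 h2]]; split=> [_|i hi].
    have := h1 (ltn0Sn _). rewrite (_ : (size t).+1 - 1 = size t) //; lia.
  case: (ltnP i (size t).+1) => him.
    have -> : (size t).+2 - i.+1 = ((size t).+1 - i.+1).+1 by lia.
    have -> : (size t).+2 - i = ((size t).+1 - i).+1 by lia.
    apply: h2; lia.
  have -> : (size t).+2 - i.+1 = 0 by lia.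
  by have -> : (size t).+2 - i = 1 by lia.
- move=> [h1 h2]; apply/andP; split.
    have := h2 (size t).+1.
    have -> : (size t).+2 - (size t).+2 = 0 by lia.
    have -> : (size t).+2 - (size t).+1 = 1 by lia.
    move=> h; apply: h; lia.
  apply/IH; split=> [_|i hi].
    have := h1 (ltn0Sn _). rewrite (_ : (size t).+1 - 1 = size t) //; lia.
  have := h2 i.
  have -> : (size t).+2 - i.+1 = ((size t).+1 - i.+1).+1 by lia.
  have -> : (size t).+2 - i = ((size t).+1 - i).+1 by lia.
  move=> h; apply: h; lia.
Qed.

Lemma fwd n f : D n f -> goodb (restricted_seq n f).
Proof.
elim: n f => [//|m IH] f hD.
rewrite rs_S.
have [k1 k2 fk kmn] := kmin_spec _ _ hD (ltn0Sn m).
set k := kmin m.+1 f in k1 k2 fk kmn *.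
have hk : in_pts m.+1 k by rewrite /in_pts; lia.
have hD' := remove_D _ _ _ hD hk fk.
have hg := IH _ hD'.
case E: m => [|m'] in IH hD hD' hk k2 hg *.
  by rewrite /=; lia.
rewrite rs_S goodb_cons2 -rs_S hg andbT.
have [l1 l2 fl lmn] := kmin_spec _ _ hD' (ltn0Sn m').
set k' := kmin m'.+1 (remove_arc k f) in l1 l2 fl lmn *.
rewrite leqNgt; apply/negP => hlt.
have hup : up k k' = k' by rewrite /up ifT //; lia.
have hk'r : in_pts m'.+2 k' by rewrite /in_pts; lia.
have n1 : k' != k by lia.
have n2 : k' != k.+1 by lia.
have /andP[a1 a2] := avoid _ _ _ _ (proj1 hD) fk hk hk'r n1 n2.
have hm := kmn k'.
move: fl; rewrite remove_arcE hup /dn; ifs; lia.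
Qed.

Lemma bwd s : goodb s -> all (fun k => 0 < k) s ->
  exists f, D (size s) f /\ restricted_seq (size s) f = s.
Proof.
elim: s => [|k t IH] hg hp.
  exists id; split=> //; split.
    by move=> i /andP[h1 h2]; exfalso; move: h2 => /=; lia.
  by move=> a b /andP[h1 h2]; exfalso; move: h2 => /=; lia.
move: hp => /andP[kp tp].
have hgt : goodb t.
  by case: t hg {IH tp} => // k' t; rewrite goodb_cons2 => /andP[].
have [f' [hD' hr']] := IH hgt tp.
have [kb kmin'] : k <= (size t).*2.+1 /\ (forall j, 1 <= j -> j.+1 < k -> f' j != j.+1).
  case E: t hg hr' hD' => [|k' t'] hg hr' hD'.
    move: hg => /= /eqP ->; split=> // j; lia.
  rewrite goodb_cons2 in hg; case/andP: hg => hk _.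
  have E3 : size (k' :: t') = (size t').+1 by [].
  rewrite E3 in hD' hr' *.
  rewrite rs_S in hr'; case: hr' => hk' _.
  have [a1 a2 a3 a4] := kmin_spec _ _ hD' (ltn0Sn _).
  rewrite hk' in a1 a2 a3 a4.
  split; first lia.
  move=> j hj hj'; apply: a4; lia.
exists (lk k f').
change (size (k :: t)) with (size t).+1.
split; first by apply: (@lk_D (size t) f' k hD'); lia.
rewrite rs_S.
have e : kmin (size t).+1 (lk k f') = k.
  apply: kmin_eq; first by rewrite /lk eqxx.
    lia.
  move=> j hj.
  have jk : j != k by lia.
  have jk1 : j != k.+1 by lia.
  rewrite lkE // (_ : dn k j = j); last by rewrite /dn ifT //; lia.
  apply/eqP; rewrite /up; case: ifP => h e; last lia.
  have hj1 : 1 <= j by lia.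
  have hj2 : j.+1 < k by lia.
  by move: (kmin' j hj1 hj2); rewrite e eqxx.
by rewrite e (rs_ext _ _ _ (remove_lk k f')) hr'.
Qed.

(* s = (k_n, ..., k_1), so k_i = nth 0 s (n - i). *)
Theorem mainTheorem3 (n : nat) (s : seq nat) :
  size s = n -> all (fun k => 0 < k) s ->
  ((exists alpha : nat -> nat, D n alpha /\ restricted_seq n alpha = s) <->
   ((0 < n -> nth 0 s (n - 1) = 1) /\
    (forall i, 1 <= i <= n - 1 -> nth 0 s (n - i.+1) <= (nth 0 s (n - i)).+1))).
Proof.
move=> Hs Hp; subst n; split.
  move=> [f [hD hr]]; apply: (good_nth s).1; rewrite -hr; exact: fwd.
move=> H; exact: (bwd s ((good_nth s).2 H) Hp).
Qed.
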